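(* Let $n\ge4$, $\bar K>0$. For all $x\ge0$ (with all functions evaluated at $x$): (i) $\frac{4x(\mathring b')^2}{\mathring b}<1$; (ii) $2x\mathring b''+\mathring b'<\frac{2(n-1)}{n(n+2)}$ provided $\delta\le\frac{2(2n-5)}{n^2-4}$; (iii) $\frac{n-2}{\sqrt{n(n-1)}}\sqrt{x\mathring b}+\mathring b<\frac xn+n\bar K$; (iv) $\mathring b(b-n\bar K)-x\mathring b'(b+n\bar K)<-2(1-\delta)(n-2)\bar K^2$; (v) $\frac{x}{n-1}(b+n\bar K)-\big(\frac{x}{n-1}+2n\bar K\big)\big(\mathring b+b-n\bar K-x\mathring b'\big)<-\frac{2\bar Kx}{n-1}+2n(n-4)\bar K^2$; (vi) $2\mathring b-\frac xn+x\mathring b'<2\big(\delta(n-2)+2\big)\bar K$.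
   Context: For $x\ge0$, $\alpha(x)=n\bar K+\frac{n}{2(n-1)}x-\frac{n-2}{2(n-1)}\sqrt{x^2+4(n-1)\bar Kx}$, $b(x)=(1-\delta)\big(\frac{x}{n-1}+2\bar K\big)+\delta\alpha(x)$ and $\mathring b(x)=b(x)-\frac xn$, where $\delta=\frac{\sqrt{12n+9}-7}{2(n-2)}$ if $4\le n\le12$ and $\delta=\frac{2(2n-5)}{n^2-2}$ if $n\ge13$. Primes denote derivatives in $x$. *)

(* Defs.v *)
From Stdlib Require Import Reals Lra.
From Coquelicot Require Import Coquelicot.
Open Scope R_scope.

Definition alpha (n : nat) (K x : R) : R :=
  INR n * K + INR n / (2 * (INR n - 1)) * x
  - (INR n - 2) / (2 * (INR n - 1)) * sqrt (x ^ 2 + 4 * (INR n - 1) * K * x).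

Definition delta (n : nat) : R :=
  if (n <=? 12)%nat then (sqrt (12 * INR n + 9) - 7) / (2 * (INR n - 2))
  else 2 * (2 * INR n - 5) / (INR n ^ 2 - 2).

Definition bfun (n : nat) (K x : R) : R :=
  (1 - delta n) * (x / (INR n - 1) + 2 * K) + delta n * alpha n K x.

Definition bo (n : nat) (K x : R) : R := bfun n K x - x / INR n.

Definition bo' (n : nat) (K x : R) : R := Derive (bo n K) x.
Definition bo'' (n : nat) (K x : R) : R := Derive (Derive (bo n K)) x.

(* Main.v *)
Require Import Defs.
From Stdlib Require Import Reals Lra Lia Psatz.
From Coquelicot Require Import Coquelicot.
Open Scope R_scope.

Definition D1 (n : nat) (K y : R) : R :=
  (1 - delta n) / (INR n - 1)
  + delta n * (INR n / (2 * (INR n - 1))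
     - (INR n - 2) / (2 * (INR n - 1)) * ((y + 2 * (INR n - 1) * K) / sqrt (y ^ 2 + 4 * (INR n - 1) * K * y)))
  - 1 / INR n.

Lemma INR_ge4 n : (4 <= n)%nat -> 4 <= INR n.
Proof. intros H. apply le_INR in H. simpl in H. lra. Qed.

Lemma is_derive_bo n K y : (4 <= n)%nat -> 0 < K -> 0 < y ->
  is_derive (bo n K) y (D1 n K y).
Proof.
  intros Hn HK Hy. pose proof (INR_ge4 n Hn) as HN.
  assert (HS : 0 < y ^ 2 + 4 * (INR n - 1) * K * y).
  { assert (0 < (INR n - 1) * K * y) by (apply Rmult_lt_0_compat; [apply Rmult_lt_0_compat|]; lra). nra. }
  unfold bo, bfun, alpha. auto_derive.
  - lra.
  - unfold D1. pose proof (sqrt_lt_R0 _ HS). replace (y * (y * 1)) with (y ^ 2) by ring. field. repeat split; lra.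
Qed.

Definition D2 (n : nat) (K y : R) : R :=
  delta n * (INR n - 2) / (2 * (INR n - 1)) * (4 * (INR n - 1) ^ 2 * K ^ 2)
   / (sqrt (y ^ 2 + 4 * (INR n - 1) * K * y)) ^ 3.

Lemma bo'_eq n K y : (4 <= n)%nat -> 0 < K -> 0 < y -> bo' n K y = D1 n K y.
Proof. intros. unfold bo'. apply is_derive_unique. now apply is_derive_bo. Qed.

Lemma bo''_eq n K y : (4 <= n)%nat -> 0 < K -> 0 < y -> bo'' n K y = D2 n K y.
Proof.
  intros Hn HK Hy. unfold bo''.
  rewrite (Derive_ext_loc _ (D1 n K)).
  2:{ exists (mkposreal y Hy). intros z Hz. apply is_derive_unique.
      apply is_derive_bo; auto. simpl in Hz. unfold ball in Hz; simpl in Hz.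
      unfold AbsRing_ball, abs, minus, plus, opp in Hz; simpl in Hz.
      apply Rabs_def2 in Hz. lra. }
  apply is_derive_unique. pose proof (INR_ge4 n Hn) as HN.
  assert (HS : 0 < y ^ 2 + 4 * (INR n - 1) * K * y).
  { assert (0 < (INR n - 1) * K * y) by (apply Rmult_lt_0_compat; [apply Rmult_lt_0_compat|]; lra). nra. }
  unfold D1. auto_derive.
  - repeat split; try lra. apply Rgt_not_eq. apply sqrt_lt_R0. lra.
  - unfold D2. pose proof (sqrt_lt_R0 _ HS). replace (y * (y * 1)) with (y ^ 2) by ring.
    pose proof (sqrt_sqrt _ (Rlt_le _ _ HS)).
    set (s := sqrt (y ^ 2 + 4 * (INR n - 1) * K * y)) in *.
    replace (4 * (INR n - 1) ^ 2 * K ^ 2) with ((y + 2 * (INR n - 1) * K) ^ 2 - s * s)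
      by (rewrite H0; ring).
    field. repeat split; lra.
Qed.
Lemma div_lt1 a c : 0 < c -> a < c -> a / c < 1.
Proof. intros Hc H. apply (Rmult_lt_reg_r c); auto. unfold Rdiv. rewrite Rmult_assoc, Rinv_l; lra. Qed.

Ltac pos := repeat (first [lra | apply Rmult_lt_0_compat | apply Rdiv_lt_0_compat | apply Rinv_0_lt_compat | apply pow_lt]); try nra.

Lemma core (N K d r x s : R) : 4 <= N -> 0 < K -> 0 < d -> d < 1 -> 0 < r -> r < 1 ->
  x = 2 * (N - 1) * K * (1 - r) ^ 2 / (2 * r) ->
  s = 2 * (N - 1) * K * (1 - r ^ 2) / (2 * r) ->
  let al := N * K + N / (2 * (N - 1)) * x - (N - 2) / (2 * (N - 1)) * s in
  let b := (1 - d) * (x / (N - 1) + 2 * K) + d * al in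
  let c := b - x / N in
  let c1 := (1 - d) / (N - 1) + d * (N / (2 * (N - 1)) - (N - 2) / (2 * (N - 1)) * ((x + 2 * (N - 1) * K) / s)) - 1 / N in
  let c2 := d * (N - 2) / (2 * (N - 1)) * (4 * (N - 1) ^ 2 * K ^ 2) / s ^ 3 in
  4 * x * c1 ^ 2 / c < 1 /\
  (d <= 2 * (2 * N - 5) / (N ^ 2 - 4) ->
     2 * x * c2 + c1 < 2 * (N - 1) / (N * (N + 2))) /\
  (N - 2) / sqrt (N * (N - 1)) * sqrt (x * c) + c < x / N + N * K /\
  c * (b - N * K) - x * c1 * (b + N * K) < - 2 * (1 - d) * (N - 2) * K ^ 2 /\
  x / (N - 1) * (b + N * K)
    - (x / (N - 1) + 2 * N * K) * (c + b - N * K - x * c1)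
    < - (2 * K * x / (N - 1)) + 2 * N * (N - 4) * K ^ 2 /\
  2 * c - x / N + x * c1 < 2 * (d * (N - 2) + 2) * K.
Proof.
  intros HN HK Hd0 Hd1 Hr0 Hr1 Hx Hs al b c c1 c2.
  assert (Hq : 0 < 2 * (N - 1) * K) by nra.
  assert (Hb : b = 2 * (N - 1) * K * (1 + r ^ 2 + d * (N - 2) * r ^ 2) / (2 * r * (N - 1))).
  { unfold b, al. rewrite Hx, Hs. field. lra. }
  assert (Hc : c = 2 * (N - 1) * K * ((1 - r) ^ 2 + 2 * r * N + d * (N - 2) * N * r ^ 2) / (2 * r * (N - 1) * N)).
  { unfold c. rewrite Hb, Hx. field. lra. }
  assert (Hc1 : c1 = ((1 - r ^ 2) - d * N * (N - 2) * r ^ 2) / ((N - 1) * N * (1 - r ^ 2))).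
  { unfold c1. rewrite Hx, Hs. field. repeat split; try lra; nra. }
  assert (Hc2 : c2 = 4 * d * (N - 2) * r ^ 3 / ((N - 1) * (2 * (N - 1) * K) * (1 - r ^ 2) ^ 3)).
  { unfold c2. rewrite Hs. field. repeat split; try lra; nra. }
  clearbody al b c c1 c2.
  assert (HN1 : 0 < N - 1) by lra. assert (HN2 : 0 < N - 2) by lra.
  assert (Hr2 : 0 < 1 - r ^ 2) by nra.
  assert (Hcpos : 0 < c).
  { rewrite Hc. pos; assert (0 < d * (N - 2) * N * r ^ 2) by pos; assert (0 < 2 * r * N) by pos; nra. }
  assert (Hxpos : 0 < x) by (rewrite Hx; pos).
  split; [|split; [|split; [|split; [|split]]]].
  -
    apply div_lt1; auto.
    assert (E : c - 4 * x * c1 ^ 2 = 2 * (N - 1) * K / (2 * r * (N - 1) ^ 2 * N ^ 2 * (1 + r) ^ 2)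
       * (((1 - r) ^ 2 + 2 * r * N + d * N * (N - 2) * r ^ 2) * ((N - 1) * N) * (1 + r) ^ 2
          - 4 * (1 - r ^ 2 - d * N * (N - 2) * r ^ 2) ^ 2)).
    { rewrite Hc, Hc1, Hx. field. repeat split; try lra; nra. }
    assert (Hbr : 0 < ((1 - r) ^ 2 + 2 * r * N + d * N * (N - 2) * r ^ 2) * ((N - 1) * N) * (1 + r) ^ 2
          - 4 * (1 - r ^ 2 - d * N * (N - 2) * r ^ 2) ^ 2).
    { set (P := (N - 1) * N). set (t := d * N * (N - 2) * r ^ 2). set (a := 1 - r ^ 2).
      assert (HP : 12 <= P) by (unfold P; nra).
      assert (Ht0 : 0 <= t) by (unfold t; assert (0 < d * N * (N - 2) * r ^ 2) by pos; lra).
      assert (HtP : t <= P * r ^ 2).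
      { unfold t, P. assert (0 < N * r ^ 2) by pos.
        assert (d * (N - 2) <= N - 1) by nra. nra. }
      assert (h1 : (1 - r) ^ 2 * (1 + r) ^ 2 = a ^ 2) by (unfold a; ring).
      assert (ha : 0 < a) by (unfold a; lra).
      assert (h2 : 4 * a ^ 2 < P * a ^ 2) by nra.
      assert (h3 : 4 * t <= P * (1 + r) ^ 2).
      { assert (4 * r ^ 2 <= (1 + r) ^ 2) by nra.
        assert (P * (4 * r ^ 2) <= P * (1 + r) ^ 2) by (apply Rmult_le_compat_l; lra).
        lra. }
      assert (h3' : 4 * t * t <= P * (1 + r) ^ 2 * t) by (apply Rmult_le_compat_r; lra).
      assert (h4 : 0 < P * (2 * r * N) * (1 + r) ^ 2) by (unfold P; pos).
      assert (h5 : 0 <= a * t) by nra.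
      replace (((1 - r) ^ 2 + 2 * r * N + t) * P * (1 + r) ^ 2 - 4 * (a - t) ^ 2)
        with (P * ((1 - r) ^ 2 * (1 + r) ^ 2) + P * (2 * r * N) * (1 + r) ^ 2 + P * (1 + r) ^ 2 * t
              - 4 * a ^ 2 + 8 * (a * t) - 4 * t * t) by ring.
      rewrite h1. lra. }
    assert (0 < 2 * (N - 1) * K / (2 * r * (N - 1) ^ 2 * N ^ 2 * (1 + r) ^ 2)) by pos.
    nra.
  -
    intros Hdd.
    assert (E : 2 * x * c2 + c1 = 1 / ((N - 1) * N) + 2 * (d * (N - 2) / (2 * (N - 1))) * (r ^ 2 * (3 + r) / (1 + r) ^ 3)).
    { rewrite Hc2, Hc1, Hx. field. repeat split; try lra; nra. }
    rewrite E.
    assert (Heps : d * (N - 2) / (2 * (N - 1)) <= (2 * N - 5) / ((N + 2) * (N - 1))).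
    { assert (Hd' : d * (N ^ 2 - 4) <= 2 * (2 * N - 5)).
      { assert (0 < N ^ 2 - 4) by nra.
        apply (Rmult_le_compat_r (N ^ 2 - 4)) in Hdd; [|lra].
        replace (2 * (2 * N - 5) / (N ^ 2 - 4) * (N ^ 2 - 4)) with (2 * (2 * N - 5)) in Hdd by (field; lra).
        lra. }
      apply (Rmult_le_reg_r (2 * (N + 2) * (N - 1))). pos.
      replace (d * (N - 2) / (2 * (N - 1)) * (2 * (N + 2) * (N - 1))) with (d * (N ^ 2 - 4)) by (field; lra).
      replace ((2 * N - 5) / ((N + 2) * (N - 1)) * (2 * (N + 2) * (N - 1))) with (2 * (2 * N - 5)) by (field; lra).
      lra. }
    assert (Hg : r ^ 2 * (3 + r) / (1 + r) ^ 3 < 1 / 2).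
    { apply (Rmult_lt_reg_r (2 * (1 + r) ^ 3)). pos.
      replace (r ^ 2 * (3 + r) / (1 + r) ^ 3 * (2 * (1 + r) ^ 3)) with (2 * (r ^ 2 * (3 + r))) by (field; lra).
      replace (1 / 2 * (2 * (1 + r) ^ 3)) with ((1 + r) ^ 3) by field.
      assert (0 < r ^ 3) by pos. assert (r ^ 3 < 1) by (apply pow_lt_1_compat; [lra|lia]). nra. }
    assert (Hep0 : 0 < d * (N - 2) / (2 * (N - 1))) by pos.
    assert (Hid : 1 / ((N - 1) * N) + (2 * N - 5) / ((N + 2) * (N - 1)) = 2 * (N - 1) / (N * (N + 2))).
    { field. repeat split; lra. }
    nra.
  -
    set (T := (N - 2) / sqrt (N * (N - 1)) * sqrt (x * c)).
    assert (HR : x / N + N * K - c = K * (N - 2) * ((1 - r) ^ 2 / (r * N) + 1 - d * r)).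
    { rewrite Hc, Hx. field. repeat split; lra. }
    assert (HR0 : 0 < K * (N - 2) * ((1 - r) ^ 2 / (r * N) + 1 - d * r)).
    { pos. assert (0 <= (1 - r) ^ 2 / (r * N)).
      { apply Rle_mult_inv_pos. apply pow2_ge_0. pos. }
      nra. }
    assert (HT0 : 0 <= T).
    { unfold T. apply Rmult_le_pos; [|apply sqrt_pos]. apply Rle_mult_inv_pos; [lra|].
      apply sqrt_lt_R0. nra. }
    assert (HT2 : T ^ 2 = (N - 2) ^ 2 * (x * c) / (N * (N - 1))).
    { assert (Hu : 0 < sqrt (N * (N - 1))) by (apply sqrt_lt_R0; nra).
      unfold T. replace (((N - 2) / sqrt (N * (N - 1)) * sqrt (x * c)) ^ 2)
        with ((N - 2) ^ 2 * sqrt (x * c) ^ 2 / sqrt (N * (N - 1)) ^ 2) by (field; lra).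
      rewrite !pow2_sqrt; [reflexivity| nra | nra]. }
    assert (Hdiff : (K * (N - 2) * ((1 - r) ^ 2 / (r * N) + 1 - d * r)) ^ 2 - T ^ 2
      = K ^ 2 * (N - 2) ^ 2 * ((1 - d * r) ^ 2 - d * (1 - r) ^ 2)).
    { rewrite HT2, Hc, Hx. field. repeat split; lra. }
    assert (Hpos : 0 < K ^ 2 * (N - 2) ^ 2 * ((1 - d * r) ^ 2 - d * (1 - r) ^ 2)).
    { pos. assert (1 - r < 1 - d * r) by nra. assert (0 < 1 - r) by lra.
      assert ((1 - r) ^ 2 < (1 - d * r) ^ 2) by nra. assert (0 < (1 - r) ^ 2) by pos. nra. }
    set (R0 := K * (N - 2) * ((1 - r) ^ 2 / (r * N) + 1 - d * r)) in *.
    assert (T < R0) by nra.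
    lra.
  -
    assert (E : c * (b - N * K) - x * c1 * (b + N * K) - (- 2 * (1 - d) * (N - 2) * K ^ 2)
               = - (2 * K ^ 2 * r ^ 2 * d * (1 - d) * (N - 2) ^ 2 / (1 + r))).
    { rewrite Hc, Hb, Hc1, Hx. field. repeat split; try lra; nra. }
    assert (0 < 2 * K ^ 2 * r ^ 2 * d * (1 - d) * (N - 2) ^ 2 / (1 + r)) by pos.
    lra.
  -
    assert (E : x / (N - 1) * (b + N * K)
    - (x / (N - 1) + 2 * N * K) * (c + b - N * K - x * c1)
    - (- (2 * K * x / (N - 1)) + 2 * N * (N - 4) * K ^ 2)
               = - (2 * K ^ 2 * d * (N - 2) * (1 + (3 * N - 2) * r + (N + 1) * r ^ 2) / (1 + r))).
    { rewrite Hc, Hb, Hc1, Hx. field. repeat split; try lra; nra. }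
    assert (0 < 2 * K ^ 2 * d * (N - 2) * (1 + (3 * N - 2) * r + (N + 1) * r ^ 2) / (1 + r)).
    { pos; assert (0 < (3 * N - 2) * r) by pos; nra. }
    lra.
  -
    assert (E : 2 * c - x / N + x * c1 - 2 * (d * (N - 2) + 2) * K
      = 2 * (N - 1) * K * ((3 - (N - 1)) * (1 - r) ^ 2 / (2 * r * (N - 1) * N)
          - d * (N - 2) / (2 * (N - 1)) * (1 - r) * (2 + 3 * r) / (1 + r))).
    { rewrite Hc, Hc1, Hx. field. repeat split; try lra; nra. }
    assert (0 < d * (N - 2) / (2 * (N - 1)) * (1 - r) * (2 + 3 * r) / (1 + r)) by pos.
    assert (0 <= (N - 4) * (1 - r) ^ 2 / (2 * r * (N - 1) * N)).
    { apply Rle_mult_inv_pos. apply Rmult_le_pos; [lra| apply pow2_ge_0]. pos. }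
    assert (0 < 2 * (N - 1) * K) by pos.
    assert (E2 : (3 - (N - 1)) * (1 - r) ^ 2 / (2 * r * (N - 1) * N) = - ((N - 4) * (1 - r) ^ 2 / (2 * r * (N - 1) * N))) by (field; repeat split; lra).
    rewrite E2 in E. nra.
Qed.

Lemma delta_bounds n : (4 <= n)%nat -> 0 < delta n < 1.
Proof.
  intros Hn. pose proof (INR_ge4 n Hn) as HN. unfold delta.
  destruct (Nat.leb_spec n 12).
  - assert (H0 : 0 <= 12 * INR n + 9) by lra.
    pose proof (sqrt_sqrt _ H0). pose proof (sqrt_pos (12 * INR n + 9)).
    set (t := sqrt (12 * INR n + 9)) in *.
    assert (7 < t) by nra. assert (t < 2 * INR n + 3) by nra.
    split.
    + apply Rdiv_lt_0_compat; lra.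
    + apply div_lt1; lra.
  - split.
    + apply Rdiv_lt_0_compat; nra.
    + apply div_lt1; nra.
Qed.

Theorem lemma5p2 (n : nat) (K x : R) :
  (4 <= n)%nat -> 0 < K -> 0 < x ->
  let N := INR n in
  let b := bfun n K x in
  let c := bo n K x in
  let c1 := bo' n K x in
  let c2 := bo'' n K x in
  let d := delta n in
  (* (i) *)
  4 * x * c1 ^ 2 / c < 1 /\
  (* (ii) *)
  (d <= 2 * (2 * N - 5) / (N ^ 2 - 4) ->
     2 * x * c2 + c1 < 2 * (N - 1) / (N * (N + 2))) /\
  (* (iii) *)
  (N - 2) / sqrt (N * (N - 1)) * sqrt (x * c) + c < x / N + N * K /\
  (* (iv) *)
  c * (b - N * K) - x * c1 * (b + N * K) < - 2 * (1 - d) * (N - 2) * K ^ 2 /\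
  (* (v) *)
  x / (N - 1) * (b + N * K)
    - (x / (N - 1) + 2 * N * K) * (c + b - N * K - x * c1)
    < - (2 * K * x / (N - 1)) + 2 * N * (N - 4) * K ^ 2 /\
  (* (vi) *)
  2 * c - x / N + x * c1 < 2 * (d * (N - 2) + 2) * K.
Proof.
  intros Hn HK Hx. cbv zeta.
  rewrite (bo'_eq n K x Hn HK Hx), (bo''_eq n K x Hn HK Hx).
  pose proof (INR_ge4 n Hn) as HN.
  destruct (delta_bounds n Hn) as [Hd0 Hd1].
  set (N := INR n) in *.
  set (q := 2 * (N - 1) * K).
  assert (Hq : 0 < q) by (unfold q; pos).
  assert (HS : 0 <= x ^ 2 + 4 * (N - 1) * K * x).
  { assert (0 < (N - 1) * K * x) by pos. nra. }
  pose proof (sqrt_sqrt _ HS) as Hss. pose proof (sqrt_pos (x ^ 2 + 4 * (N - 1) * K * x)) as Hs0.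
  set (s := sqrt (x ^ 2 + 4 * (N - 1) * K * x)) in *.
  set (w := x + q - s).
  assert (Hkey : w ^ 2 - 2 * w * (x + q) + q ^ 2 = 0).
  { unfold w. replace (x ^ 2 + 4 * (N - 1) * K * x) with ((x + q) ^ 2 - q ^ 2) in Hss by (unfold q; ring).
    nra. }
  assert (Hw0 : 0 < w).
  { unfold w. assert (s * s < (x + q) * (x + q)).
    { rewrite Hss. unfold q. assert (0 < (N - 1) * K) by pos. nra. }
    nra. }
  assert (Hw1 : w < q).
  { unfold w. assert (x * x < s * s).
    { rewrite Hss. assert (0 < (N - 1) * K * x) by pos. nra. }
    nra. }
  set (r := w / q).
  assert (Hr0 : 0 < r) by (unfold r; pos).
  assert (Hr1 : r < 1) by (unfold r; apply div_lt1; lra).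
  assert (Hxr : x = 2 * (N - 1) * K * (1 - r) ^ 2 / (2 * r)).
  { fold q. unfold r. replace (q * (1 - w / q) ^ 2 / (2 * (w / q))) with ((q - w) ^ 2 / (2 * w))
      by (field; lra).
    apply (Rmult_eq_reg_r (2 * w)); [|lra].
    replace ((q - w) ^ 2 / (2 * w) * (2 * w)) with ((q - w) ^ 2) by (field; lra). nra. }
  assert (Hsr : s = 2 * (N - 1) * K * (1 - r ^ 2) / (2 * r)).
  { fold q. unfold r. replace (q * (1 - (w / q) ^ 2) / (2 * (w / q))) with ((q ^ 2 - w ^ 2) / (2 * w))
      by (field; lra).
    apply (Rmult_eq_reg_r (2 * w)); [|lra].
    replace ((q ^ 2 - w ^ 2) / (2 * w) * (2 * w)) with (q ^ 2 - w ^ 2) by (field; lra).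
    assert (s = x + q - w) by (unfold w; ring). rewrite H. nra. }
  exact (core N K (delta n) r x s HN HK Hd0 Hd1 Hr0 Hr1 Hxr Hsr).
Qed.
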